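(* Let $\hat v\in\{0,1\}^{\mathcal T}$ be the indicator vector of a proper triple set. Then the optimal objective value of the linear program $\mathrm{D}(\hat v)$ lies in the interval $[-\eta,0]$, where $\eta=-\sum_{i=1}^m\min(0,\alpha_i)$ and $\mathrm{D}(\hat v)$ is: maximize $-\sum_{t\in\mathcal T}\big[(1-\hat v_t)(\lambda_{t,1}+\lambda_{t,2})+(2-\hat v_t)\lambda_{t,3}\big]-\sum_{J\in\mathcal N}\mu_J$ over $\lambda_{t,1},\lambda_{t,2},\lambda_{t,3}\ge0$ ($t\in\mathcal T$) and $\mu_J\ge 0$ ($J\in\mathcal N$), subject to, for every $J\in\mathcal N$, $\beta_J+\sum_{t:\mathsf{tail1}(t)=J}(-\lambda_{t,1}+\lambda_{t,3})+\sum_{t:\mathsf{tail2}(t)=J}(-\lambda_{t,2}+\lambda_{t,3})+\sum_{t:\mathsf{head}(t)=J}(\lambda_{t,1}+\lambda_{t,2}-\lambda_{t,3})+\mu_J\ge 0.$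
   Context: A multilinear program has data $n,m$, coefficients $\alpha_i\in\mathbb{R}$ and nonempty index sets $J_i\subseteq[n]$. Let $\mathcal N=\bigcup_i\{J:\emptyset\ne J\subseteq J_i\}$ and $\beta_J=\sum_{i:J_i=J}\alpha_i$ for $J\in\mathcal N$. A triple is $t=(J,J',J'')$ with $J''\in\mathcal N$, $|J''|\ge2$, $J,J'$ nonempty, disjoint, $J\cup J'=J''$, listed with $J,J'$ in lexicographic order; $\mathsf{tail1}(t)=J$, $\mathsf{tail2}(t)=J'$, $\mathsf{head}(t)=J''$; $\mathcal T$ is the set of all triples. A proper triple set is a set $T\subseteq\mathcal T$ containing a subset $T'$ such that (1) every $J_i$ with $|J_i|>1$ is the head of some triple in $T'$, and (2) whenever a set $J$ with $|J|>1$ is the first or second element of a triple in $T'$, $J$ is the head of a different triple in $T'$; its indicator vector has $\hat v_t=1$ iff $t\in T$. $\mathrm{D}(\hat v)$ is the LP dual of the McCormick relaxation $\min\sum_J\beta_Jy_J$ over $y\in[0,1]^{\mathcal N}$ subject to $y_{J''}-y_J\le1-\hat v_t$, $y_{J''}-y_{J'}\le1-\hat v_t$, $y_J+y_{J'}-y_{J''}\le2-\hat v_t$ for all $t=(J,J',J'')\in\mathcal T$ (with $\lambda_{t,1},\lambda_{t,2},\lambda_{t,3}$ the multipliers of these three inequalities and $\mu_J$ that of $y_J\le1$). *)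

(* Defs.v *)
From HB Require Import structures.
From mathcomp Require Import all_boot all_order all_algebra.
From mathcomp Require Import reals.
Set Implicit Arguments. Unset Strict Implicit. Unset Printing Implicit Defensive.
Import Order.TTheory GRing.Theory Num.Theory.
Local Open Scope ring_scope.

Definition calN (n m : nat) (Js : 'I_m -> {set 'I_n}) : {set {set 'I_n}} :=
  [set J : {set 'I_n} | (J != set0) && [exists i : 'I_m, J \subset Js i]].

Definition beta (R : realType) (n m : nat) (alpha : 'I_m -> R)
    (Js : 'I_m -> {set 'I_n}) (J : {set 'I_n}) : R :=
  \sum_(i < m | Js i == J) alpha i.

Fixpoint lex_lt (s1 s2 : seq nat) : bool :=
  match s1, s2 with
  | [::], [::] => false
  | [::], _ :: _ => true
  | _ :: _, [::] => false
  | x :: s1', y :: s2' => (x < y)%N || ((x == y) && lex_lt s1' s2')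
  end.

Definition setseq (n : nat) (A : {set 'I_n}) : seq nat :=
  sort leq [seq nat_of_ord i | i <- enum A].

Definition trip (n : nat) : finType :=
  ({set 'I_n} * {set 'I_n} * {set 'I_n})%type.
Definition tail1 (n : nat) (t : trip n) : {set 'I_n} := t.1.1.
Definition tail2 (n : nat) (t : trip n) : {set 'I_n} := t.1.2.
Definition head (n : nat) (t : trip n) : {set 'I_n} := t.2.

Definition calT (n m : nat) (Js : 'I_m -> {set 'I_n}) : {set trip n} :=
  [set t : trip n |
    [&& head t \in calN Js, (1 < #|head t|)%N,
        tail1 t != set0, tail2 t != set0,
        [disjoint tail1 t & tail2 t],
        tail1 t :|: tail2 t == head t &
        lex_lt (setseq (tail1 t)) (setseq (tail2 t))]].

Definition proper_triple_set (n m : nat) (Js : 'I_m -> {set 'I_n})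
    (T : {set trip n}) : Prop :=
  T \subset calT Js /\
  exists T' : {set trip n}, T' \subset T /\
    (forall i : 'I_m, (1 < #|Js i|)%N ->
       exists t, t \in T' /\ head t = Js i) /\
    (forall t, t \in T' ->
       ((1 < #|tail1 t|)%N -> exists t', [/\ t' \in T', t' != t & head t' = tail1 t]) /\
       ((1 < #|tail2 t|)%N -> exists t', [/\ t' \in T', t' != t & head t' = tail2 t])).

Definition vhat (R : realType) (n : nat) (T : {set trip n}) (t : trip n) : R :=
  if t \in T then 1 else 0.

Definition D_feasible (R : realType) (n m : nat) (alpha : 'I_m -> R)
    (Js : 'I_m -> {set 'I_n}) (v : trip n -> R)
    (l1 l2 l3 : trip n -> R) (mu : {set 'I_n} -> R) : Prop :=
  (forall t, t \in calT Js -> [/\ 0 <= l1 t, 0 <= l2 t & 0 <= l3 t]) /\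
  (forall J, J \in calN Js -> 0 <= mu J) /\
  (forall J, J \in calN Js ->
     0 <= beta alpha Js J
          + \sum_(t in calT Js | tail1 t == J) (- l1 t + l3 t)
          + \sum_(t in calT Js | tail2 t == J) (- l2 t + l3 t)
          + \sum_(t in calT Js | head t == J) (l1 t + l2 t - l3 t)
          + mu J).

Definition D_obj (R : realType) (n m : nat) (Js : 'I_m -> {set 'I_n})
    (v : trip n -> R) (l1 l2 l3 : trip n -> R) (mu : {set 'I_n} -> R) : R :=
  - (\sum_(t in calT Js) ((1 - v t) * (l1 t + l2 t) + (2 - v t) * l3 t))
  - \sum_(J in calN Js) mu J.

Definition eta_val (R : realType) (m : nat) (alpha : 'I_m -> R) : R :=
  - \sum_(i < m) Num.min 0 (alpha i).

(* Main.v *)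
Require Import Defs.
From HB Require Import structures.
From mathcomp Require Import all_boot all_order all_algebra.
From mathcomp Require Import reals.
From mathcomp Require Import ring lra.
From Stdlib Require Import FunctionalExtensionality.
Import Order.TTheory GRing.Theory Num.Theory.
Local Open Scope ring_scope.

Section LP.
Variable R : realFieldType.
Variable V : finType.

Definition upd (x : V -> R) v t := fun u => if u == v then t else x u.
Definition delta v : V -> R := upd (fun _ => 0) v 1.
Definition islin (f : (V -> R) -> R) :=
  (forall x y, f (fun u => x u + y u) = f x + f y) /\
  (forall k x, f (fun u => k * x u) = k * f x).
Definition indep (f : (V -> R) -> R) v := forall x t, f (upd x v t) = f x.

Record cstr := Cstr { cf : (V -> R) -> R; cd : R; cb : R }.
Definition sat (c : cstr) x z := cf c x + cd c * z <= cb c.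
Definition satall (cs : seq cstr) x z := forall c, List.In c cs -> sat c x z.

Lemma upd_decomp f x v t : islin f ->
  f (upd x v t) = f (upd x v 0) + t * f (delta v).
Proof.
move=> [hA hM].
have -> : upd x v t = (fun u => upd x v 0 u + (fun w => t * delta v w) u).
  apply: functional_extensionality => u; rewrite /upd /delta /upd.
  by case: (u == v); rewrite ?mulr1 ?mulr0 ?add0r ?addr0.
by rewrite hA hM.
Qed.

Lemma upd_id (x : V -> R) v : upd x v (x v) = x.
Proof. by apply: functional_extensionality => u; rewrite /upd; case: eqP => // ->. Qed.

Lemma indep0 f v : islin f -> f (delta v) = 0 -> indep f v.
Proof.
move=> hl h0 x t.
have e1 := upd_decomp _ x v t hl; have e2 := upd_decomp _ x v (x v) hl.
rewrite upd_id in e2; rewrite e1 e2 h0 !mulr0 //.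
Qed.

Lemma sandwich (L U : seq R) :
  (forall l u, List.In l L -> List.In u U -> l <= u) ->
  exists t, (forall l, List.In l L -> l <= t) /\ (forall u, List.In u U -> t <= u).
Proof.
elim: L => [|l L IH] h.
  have [t ht] : exists t, forall u, List.In u U -> t <= u.
    elim: U {h} => [|u U [t ht]]; first by exists 0.
    exists (Num.min t u) => w /= [<-|hw]; first by rewrite ge_min lexx orbT.
    by rewrite ge_min ht.
  by exists t; split.
have [t [h1 h2]] : exists t, (forall l, List.In l L -> l <= t) /\ (forall u, List.In u U -> t <= u).
  by apply: IH => l' u hl hu; apply: h => //=; right.
exists (Num.max t l); split.
  by move=> l' /= [<-|hl]; rewrite le_max ?lexx ?orbT // h1.
by move=> u hu; rewrite ge_max h2 //= h //=; left.
Qed.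

Lemma minex (U : seq R) : U <> [::] ->
  exists u, List.In u U /\ forall w, List.In w U -> u <= w.
Proof.
elim: U => [//|u U IH] _.
case: U IH => [|u' U] IH.
  by exists u; split => [|w /= [<-|[]]]; [left|].
have [m [hm1 hm2]] := IH ltac:(done).
case: (lerP u m) => hum.
  exists u; split; first by left.
  by move=> w /= [<-|hw] //; apply: le_trans hum (hm2 _ hw).
exists m; split; first by right.
by move=> w /= [<-|hw]; [exact: ltW|exact: hm2].
Qed.

Definition comb (p q : cstr) v :=
  let ap := cf p (delta v) in let aq := cf q (delta v) in
  Cstr (fun x => (- aq) * cf p x + ap * cf q x)
       ((- aq) * cd p + ap * cd q) ((- aq) * cb p + ap * cb q).

Lemma islin_comb p q v : islin (cf p) -> islin (cf q) -> islin (cf (comb p q v)).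
Proof.
move=> [pA pM] [qA qM]; split => [x y|k x] /=.
  by rewrite pA qA; ring.
by rewrite pM qM; ring.
Qed.

Lemma fm_step cs v : (forall c, List.In c cs -> islin (cf c)) ->
  exists cs', (forall c, List.In c cs' -> islin (cf c) /\ indep (cf c) v) /\
   (forall u, (forall c, List.In c cs -> indep (cf c) u) ->
              forall c, List.In c cs' -> indep (cf c) u) /\
   forall x z, satall cs' x z <-> exists t, satall cs (upd x v t) z.
Proof.
move=> hl.
pose a c := cf c (delta v).
pose Z := List.filter (fun c => a c == 0) cs.
pose P := List.filter (fun c => 0 < a c) cs.
pose N := List.filter (fun c => a c < 0) cs.
pose C := List.flat_map (fun p => List.map (fun q => comb p q v) N) P.
have inC c : List.In c C -> exists p q, [/\ c = comb p q v, List.In p cs, List.In q cs,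
      0 < a p & a q < 0].
  move=> /List.in_flat_map [p [/List.filter_In [hp hp'] /List.in_map_iff [q [<- /List.filter_In [hq hq']]]]].
  by exists p, q; split.
exists (Z ++ C)%list; split; [|split].
- move=> c /List.in_app_iff [/List.filter_In [hc /eqP h0]|/inC [p [q [-> hp hq hap haq]]]].
    split; [exact: hl|]. move: (indep0 _ _ (hl _ hc) h0). done.
  have hlc := islin_comb p q v (hl _ hp) (hl _ hq).
  by split => //; apply: indep0 => //=; rewrite -/(a p) -/(a q); ring.
- move=> u hu c /List.in_app_iff [/List.filter_In [hc _]|/inC [p [q [-> hp hq hap haq]]]].
    exact: hu.
  by move=> x t /=; rewrite !hu.
move=> x z; split.
- move=> hs.
  pose x0 := upd x v 0.
  pose r c := cb c - cd c * z - cf c x0.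
  have hdec c t : List.In c cs -> cf c (upd x v t) = cf c x0 + t * a c.
    by move=> hc; rewrite upd_decomp //; exact: hl.
  have hLU : forall l u, List.In l (List.map (fun q => r q / a q) N) ->
     List.In u (List.map (fun p => r p / a p) P) -> l <= u.
    move=> l u /List.in_map_iff [q [<- /List.filter_In [hq hq']]]
               /List.in_map_iff [p [<- /List.filter_In [hp hp']]].
    have hc : List.In (comb p q v) (Z ++ C)%list.
      apply/List.in_app_iff; right; apply/List.in_flat_map; exists p; split.
        by apply/List.filter_In.
      by apply/List.in_map_iff; exists q; split => //; apply/List.filter_In.
    have := hs _ hc; rewrite /sat /=.
    have hlc := islin_comb p q v (hl _ hp) (hl _ hq).
    have e : forall c, List.In c cs -> cf c x = cf c x0 + x v * a c.
      by move=> c hc'; rewrite -(hdec _ _ hc') upd_id.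
    rewrite (e _ hp) (e _ hq) -/(a p) -/(a q) => H.
    have H' : 0 <= (- a q) * r p + a p * r q by rewrite /r; lra.
    have apn : a p != 0 by rewrite gt_eqF.
    have aqn : a q != 0 by rewrite lt_eqF.
    have ep : r p = (r p / a p) * a p by rewrite divfK.
    have eq : r q = (r q / a q) * a q by rewrite divfK.
    set U := r p / a p in ep *; set L := r q / a q in eq *.
    have H2 : 0 <= - a q * (U * a p) + a p * (L * a q) by rewrite -ep -eq.
    have : 0 <= (a p * - a q) * (U - L).
      by move: H2; congr (_ <= _); ring.
    rewrite pmulr_rge0; first lra.
    by apply: mulr_gt0; lra.
  have [t [ht1 ht2]] := sandwich _ _ hLU.
  exists t => c hc; rewrite /sat (hdec _ _ hc).
  case: (ltgtP (a c) 0) => hac.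
  + have hN : List.In c N by apply/List.filter_In; split.
    have := ht1 (r c / a c) (List.in_map _ _ _ hN).
    rewrite ler_ndivrMr // /r; lra.
  + have hP : List.In c P by apply/List.filter_In; split.
    have := ht2 (r c / a c) (List.in_map _ _ _ hP).
    rewrite ler_pdivlMr // /r; lra.
  + have hZ : List.In c (Z ++ C)%list.
      by apply/List.in_app_iff; left; apply/List.filter_In; split => //; apply/eqP.
    have := hs _ hZ; rewrite /sat hac mulr0 addr0.
    have e := hdec c (x v) hc; rewrite upd_id in e.
    by rewrite e hac mulr0 addr0.
- move=> [t ht] c /List.in_app_iff [/List.filter_In [hc /eqP h0]|/inC [p [q [-> hp hq hap haq]]]].
    have := ht _ hc; rewrite /sat.
    by rewrite (indep0 _ _ (hl _ hc) h0).
  have hlc := islin_comb p q v (hl _ hp) (hl _ hq).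
  have hi : indep (cf (comb p q v)) v by apply: indep0 => //=; ring.
  rewrite /sat -(hi x t) /=.
  have := ht _ hp; have := ht _ hq; rewrite /sat -/(a p) -/(a q) => h1 h2.
  nra.
Qed.


Lemma fm_elim (vs : seq V) cs : (forall c, List.In c cs -> islin (cf c)) ->
  exists cs', (forall c, List.In c cs' -> islin (cf c) /\ forall v, v \in vs -> indep (cf c) v) /\
   (forall u, (forall c, List.In c cs -> indep (cf c) u) ->
              forall c, List.In c cs' -> indep (cf c) u) /\
   forall x z, satall cs' x z <->
     exists y, (forall u, u \notin vs -> y u = x u) /\ satall cs y z.
Proof.
elim: vs cs => [|v vs IH] cs hl.
  exists cs; split; [by move=> c hc; split => //; apply: hl|split => //].
  move=> x z; split; first by move=> h; exists x.
  move=> [y [hy hs]].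
  have -> : x = y by apply: functional_extensionality => u; rewrite hy.
  done.
have [cs1 [h1 [h2 h3]]] := fm_step cs v hl.
have [cs' [h1' [h2' h3']]] := IH cs1 (fun c hc => proj1 (h1 c hc)).
exists cs'; split; [|split].
- move=> c hc; split; first by case: (h1' c hc).
  move=> u; rewrite in_cons => /orP [/eqP ->|hu].
    by apply: h2' hc => c' hc'; case: (h1 _ hc').
  by case: (h1' c hc) => _; apply.
- by move=> u hu c hc; apply: h2' hc; apply: h2.
move=> x z; rewrite h3'; split.
- move=> [y [hy /h3 [t ht]]]; exists (upd y v t); split => //.
  move=> u; rewrite in_cons negb_or => /andP [huv hu].
  by rewrite /upd (negbTE huv) hy.
- move=> [y' [hy' hs]]; exists (upd y' v (x v)); split.
    move=> u hu; rewrite /upd; case: eqP => [->//|/eqP huv].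
    by apply: hy'; rewrite in_cons negb_or huv.
  apply/h3; exists (y' v).
  have -> : upd (upd y' v (x v)) v (y' v) = y'.
    by apply: functional_extensionality => u; rewrite /upd; case: eqP => [->|].
  done.
Qed.

Lemma indep_all f (vs : seq V) : (forall v, v \in vs -> indep f v) ->
  forall x y, (forall u, u \notin vs -> x u = y u) -> f x = f y.
Proof.
move=> hi x y; elim: vs hi x y => [|v vs IH] hi x y hxy.
  by have -> : x = y by apply: functional_extensionality => u; rewrite hxy.
rewrite -(hi v (mem_head _ _) x (y v)); apply: IH.
  by move=> w hw; apply: hi; rewrite in_cons hw orbT.
move=> u hu; rewrite /upd; case: eqP => [->//|/eqP huv].
by apply: hxy; rewrite in_cons negb_or huv.
Qed.

Lemma max1d (cs : seq cstr) (g : cstr -> R) (z0 : R) :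
  let P z := forall c, List.In c cs -> g c + cd c * z <= cb c in
  P z0 -> (forall z, P z -> z <= 0) ->
  exists zs, P zs /\ forall z, P z -> z <= zs.
Proof.
move=> P hz0 hb.
pose Pos := List.filter (fun c => 0 < cd c) cs.
pose U := List.map (fun c => (cb c - g c) / cd c) Pos.
have inU c : List.In c Pos -> forall z, P z -> z <= (cb c - g c) / cd c.
  move=> /List.filter_In [hc hd] z hz.
  by rewrite ler_pdivlMr //; have := hz _ hc; lra.
case E : Pos => [|c0 Pos'].
  exfalso.
  have : P (Num.max z0 1).
    move=> c hc.
    have hd : cd c <= 0.
      rewrite leNgt; apply/negP => hd.
      have : List.In c Pos by apply/List.filter_In; split.
      by rewrite E.
    have := hz0 _ hc.
    have : cd c * Num.max z0 1 <= cd c * z0 by apply: ler_wnM2l => //; rewrite le_max lexx.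
    lra.
  move/hb; rewrite ge_max => /andP [_]; lra.
have [zs [hzs1 hzs2]] : exists u, List.In u U /\ forall w, List.In w U -> u <= w.
  by apply: minex; rewrite /U E.
move: (hzs1) => /List.in_map_iff [cz [ez hcz]].
have Pzs : P zs.
  move=> c hc.
  case: (ltP 0 (cd c)) => hd.
    have hP : List.In c Pos by apply/List.filter_In; split.
    have := hzs2 _ (List.in_map (fun c => (cb c - g c) / cd c) _ _ hP).
    by rewrite ler_pdivlMr //; lra.
  have h0 : z0 <= zs by rewrite -ez; apply: inU.
  have := hz0 _ hc.
  have : cd c * zs <= cd c * z0 by apply: ler_wnM2l.
  lra.
exists zs; split => // z hz.
by rewrite -ez; apply: inU.
Qed.


Lemma islin_proj u : islin (fun x => x u).
Proof. by split. Qed.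
Lemma islin_add f g : islin f -> islin g -> islin (fun x => f x + g x).
Proof. move=> [fA fM] [gA gM]; split => [x y|k x]; rewrite ?fA ?gA ?fM ?gM; ring. Qed.
Lemma islin_opp f : islin f -> islin (fun x => - f x).
Proof. move=> [fA fM]; split => [x y|k x]; rewrite ?fA ?fM; ring. Qed.
Lemma islin_scale k f : islin f -> islin (fun x => k * f x).
Proof. move=> [fA fM]; split => [x y|k' x]; rewrite ?fA ?fM; ring. Qed.
Lemma islin_sum (I : Type) (r : seq I) (P : pred I) (F : I -> (V -> R) -> R) :
  (forall i, islin (F i)) -> islin (fun x => \big[+%R/0]_(i <- r | P i) F i x).
Proof.
move=> hF; split => [x y|k x].
  by rewrite -big_split /=; apply: eq_bigr => i _; case: (hF i) => ->.
by rewrite mulr_sumr; apply: eq_bigr => i _; case: (hF i) => _ ->.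
Qed.

End LP.
Arguments Cstr {R V}.
Arguments cf {R V}. Arguments cd {R V}. Arguments cb {R V}.
Arguments satall {R V}. Arguments sat {R V}. Arguments islin {R V}. Arguments indep {R V}.
Arguments fm_elim {R V}. Arguments max1d {R V}. Arguments indep_all {R V}.
Arguments islin_proj {R V}. Arguments islin_add {R V}. Arguments islin_opp {R V}.
Arguments islin_scale {R V}. Arguments islin_sum {R V}.

Lemma In_mem (T : eqType) (x : T) (s : seq T) : List.In x s <-> x \in s.
Proof.
elim: s => //= y s IH; rewrite in_cons; split.
  by move=> [->|/IH h]; rewrite ?eqxx ?h ?orbT.
by move=> /orP [/eqP ->|/IH h]; [left|right].
Qed.

Definition VT (n : nat) : finType := (trip n + trip n + trip n + {set 'I_n})%type.
Section Enc.
Variables (R : realType) (n m : nat) (alpha : 'I_m -> R) (Js : 'I_m -> {set 'I_n}) (v : trip n -> R).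
Definition X1 (x : VT n -> R) t := x (inl (inl (inl t))).
Definition X2 (x : VT n -> R) t := x (inl (inl (inr t))).
Definition X3 (x : VT n -> R) t := x (inl (inr t)).
Definition XM (x : VT n -> R) J := x (inr J).
Definition enc (l1 l2 l3 : trip n -> R) (mu : {set 'I_n} -> R) : VT n -> R :=
  fun u => match u with
  | inl (inl (inl t)) => l1 t | inl (inl (inr t)) => l2 t
  | inl (inr t) => l3 t | inr J => mu J end.
Definition lhsJ x J :=
  \sum_(t in calT Js | tail1 t == J) (- X1 x t + X3 x t)
  + \sum_(t in calT Js | tail2 t == J) (- X2 x t + X3 x t)
  + \sum_(t in calT Js | Defs.head t == J) (X1 x t + X2 x t - X3 x t)
  + XM x J.
Definition objf x := D_obj Js v (X1 x) (X2 x) (X3 x) (XM x).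
Definition encs : seq (cstr R (VT n)) :=
  (List.map (fun t => Cstr (fun x => - X1 x t) 0 0) (enum (calT Js)) ++
  (List.map (fun t => Cstr (fun x => - X2 x t) 0 0) (enum (calT Js)) ++
  (List.map (fun t => Cstr (fun x => - X3 x t) 0 0) (enum (calT Js)) ++
  (List.map (fun J => Cstr (fun x => - XM x J) 0 0) (enum (calN Js)) ++
  (List.map (fun J => Cstr (fun x => - lhsJ x J) 0 (beta alpha Js J)) (enum (calN Js)) ++
  [:: Cstr objf (-1) 0; Cstr (fun x => - objf x) 1 0])))))%list.

Lemma lhsJ_lin J : islin (fun x => lhsJ x J).
Proof.
rewrite /lhsJ; apply: islin_add; [apply: islin_add; [apply: islin_add|]|]; try apply: islin_sum => t.
- by apply: islin_add; [apply: islin_opp|]; apply: islin_proj.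
- by apply: islin_add; [apply: islin_opp|]; apply: islin_proj.
- by apply: islin_add; [apply: islin_add|apply: islin_opp]; apply: islin_proj.
- exact: islin_proj.
Qed.

Lemma objf_lin : islin objf.
Proof.
rewrite /objf /D_obj; apply: islin_add; apply: islin_opp; apply: islin_sum => t.
  apply: islin_add; apply: islin_scale; first apply: islin_add; apply: islin_proj.
exact: islin_proj.
Qed.

Lemma encs_lin c : List.In c encs -> islin (cf c).
Proof.
rewrite /encs !List.in_app_iff.
move=> [h|[h|[h|[h|[h|h]]]]].
1-5: move: h => /List.in_map_iff [t [<- _]] /=.
1-4: by apply: islin_opp; exact: islin_proj.
- apply: islin_opp; exact: lhsJ_lin.
move: h => /= [<-|[<-|[]]] /=; first exact: objf_lin.
apply: islin_opp; exact: objf_lin.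
Qed.

Lemma sat_enc x z : satall encs x z <->
  D_feasible alpha Js v (X1 x) (X2 x) (X3 x) (XM x) /\ z = objf x.
Proof.
have inE' (A : finType) (a : A) (B : {set A}) : a \in B -> List.In a (enum B).
  by move=> h; apply/In_mem; rewrite mem_enum.
rewrite /satall /sat; split.
- move=> hs.
  have o1 := hs _ (ltac:(rewrite /encs !List.in_app_iff; do 5 right; left; reflexivity)).
  have o2 := hs _ (ltac:(rewrite /encs !List.in_app_iff; do 5 right; right; left; reflexivity)).
  simpl in o1, o2.
  split; last lra.
  split; [|split].
  + move=> t ht; split.
    * have := hs (Cstr (fun x => - X1 x t) 0 0); simpl; rewrite mul0r addr0 oppr_le0; apply.
      rewrite /encs !List.in_app_iff; left; apply/List.in_map_iff; exists t; split => //; exact: inE'.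
    * have := hs (Cstr (fun x => - X2 x t) 0 0); simpl; rewrite mul0r addr0 oppr_le0; apply.
      rewrite /encs !List.in_app_iff; right; left; apply/List.in_map_iff; exists t; split => //; exact: inE'.
    * have := hs (Cstr (fun x => - X3 x t) 0 0); simpl; rewrite mul0r addr0 oppr_le0; apply.
      rewrite /encs !List.in_app_iff; do 2 right; left; apply/List.in_map_iff; exists t; split => //; exact: inE'.
  + move=> J hJ.
    have := hs (Cstr (fun x => - XM x J) 0 0); simpl; rewrite mul0r addr0 oppr_le0; apply.
    rewrite /encs !List.in_app_iff; do 3 right; left; apply/List.in_map_iff; exists J; split => //; exact: inE'.
  + move=> J hJ.
    have := hs (Cstr (fun x => - lhsJ x J) 0 (beta alpha Js J)); simpl; rewrite mul0r addr0 /lhsJ.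
    move=> h; have := h (ltac:(rewrite /encs !List.in_app_iff; do 4 right; left; apply/List.in_map_iff; exists J; split => //; exact: inE')).
    rewrite /X1 /X2 /X3 /XM; lra.
- move=> [[hnn [hmu hJ]] ->] c.
  have outE (A : finType) (a : A) (B : {set A}) : List.In a (enum B) -> a \in B.
    by move=> /In_mem; rewrite mem_enum.
  rewrite /encs !List.in_app_iff.
  move=> [h|[h|[h|[h|[h|h]]]]].
  1-5: move: h => /List.in_map_iff [t [<- /outE ht]] /=; rewrite mul0r addr0 ?oppr_le0.
  + by case: (hnn t ht).
  + by case: (hnn t ht).
  + by case: (hnn t ht).
  + exact: hmu.
  + have := hJ t ht; rewrite /lhsJ /X1 /X2 /X3 /XM; lra.
  move: h => /= [<-|[<-|[]]] /=; lra.
Qed.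

End Enc.

Arguments encs {R n m}. Arguments encs_lin {R n m}. Arguments sat_enc {R n m}.
Arguments objf {R n m}. Arguments X1 {R n}. Arguments X2 {R n}. Arguments X3 {R n}.
Arguments XM {R n}. Arguments enc {R n}.

Theorem lemma2 (R : realType) (n m : nat) (alpha : 'I_m -> R)
    (Js : 'I_m -> {set 'I_n}) (hJs : forall i, Js i != set0)
    (T : {set trip n}) (hT : proper_triple_set Js T) :
  exists (l1 l2 l3 : trip n -> R) (mu : {set 'I_n} -> R),
    [/\ D_feasible alpha Js (vhat R T) l1 l2 l3 mu,
        (forall (l1' l2' l3' : trip n -> R) (mu' : {set 'I_n} -> R),
           D_feasible alpha Js (vhat R T) l1' l2' l3' mu' ->
           D_obj Js (vhat R T) l1' l2' l3' mu' <= D_obj Js (vhat R T) l1 l2 l3 mu),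
        - eta_val alpha <= D_obj Js (vhat R T) l1 l2 l3 mu
      & D_obj Js (vhat R T) l1 l2 l3 mu <= 0].
Proof.
set v := vhat R T.
have hv t : 0 <= v t <= 1 by rewrite /v /vhat; case: (t \in T); rewrite ?lexx ?ler01.
have hobj0 l1 l2 l3 mu : D_feasible alpha Js v l1 l2 l3 mu -> D_obj Js v l1 l2 l3 mu <= 0.
  move=> [hnn [hmu _]]; rewrite /D_obj.
  have h1 : 0 <= \sum_(t in calT Js) ((1 - v t) * (l1 t + l2 t) + (2 - v t) * l3 t).
    apply: sumr_ge0 => t ht; case: (hnn t ht) => a b c; have := hv t.
    move=> /andP [v0 v1].
    apply: addr_ge0; apply: mulr_ge0; lra.
  have h2 : 0 <= \sum_(J in calN Js) mu J by apply: sumr_ge0 => J hJ; exact: hmu.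
  lra.
pose cs := encs alpha Js v.
have [cs' [h1 [_ h3]]] := fm_elim (enum (VT n)) cs (encs_lin alpha Js v).
pose g (c : cstr R (VT n)) := cf c (fun _ : VT n => (0:R)).
pose P (z : R) := forall c, List.In c cs' -> g c + cd c * z <= cb c.
have hP x z : satall cs' x z <-> P z.
  have e c : List.In c cs' -> cf c x = g c.
    move=> hc; apply: (indep_all _ (enum (VT n))).
      by move=> u hu; case: (h1 c hc) => _; apply.
    by move=> u; rewrite mem_enum.
  split => h c hc; have := h c hc; rewrite /sat e //.
have hfP l1 l2 l3 mu : D_feasible alpha Js v l1 l2 l3 mu -> P (D_obj Js v l1 l2 l3 mu).
  move=> hf; apply/(hP (fun _ => 0))/h3; exists (enc l1 l2 l3 mu); split.
    by move=> u; rewrite mem_enum.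
  by apply/sat_enc; split.
have hPf z : P z -> exists y : VT n -> R, D_feasible alpha Js v (X1 y) (X2 y) (X3 y) (XM y) /\ z = objf Js v y.
  move=> /(hP (fun _ => 0))/h3 [y [_ /sat_enc hy]]; by exists y.
pose mu0 J := - \sum_(i < m | Js i == J) Num.min 0 (alpha i).
have f0 : D_feasible alpha Js v (fun _ => 0) (fun _ => 0) (fun _ => 0) mu0.
  split; [|split].
  - by move=> t _; rewrite lexx.
  - move=> J _; rewrite /mu0 oppr_ge0; apply: sumr_le0 => i _; rewrite ge_min lexx //.
  - move=> J _; rewrite !big1 ?addr0 // => [|t _|t _|t _]; try ring.
    rewrite /mu0 /beta -sumrB; apply: sumr_ge0 => i _; rewrite subr_ge0 ge_min lexx orbT //.
have o0 : - eta_val alpha <= D_obj Js v (fun _ => 0) (fun _ => 0) (fun _ => 0) mu0.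
  rewrite /D_obj big1 => [|t _]; last by ring.
  rewrite /eta_val opprK oppr0 sub0r /mu0 sumrN opprK.
  rewrite (partition_big Js (fun J => J \in calN Js)) /=; last first.
    by move=> i _; rewrite inE hJs /=; apply/existsP; exists i.
  by apply: ler_sum => J hJ; rewrite lexx.
have hb z : P z -> z <= 0.
  by move=> /hPf [y [hy ->]]; exact: hobj0.
have [zs [Pzs hmax]] := max1d cs' g _ (hfP _ _ _ _ f0) hb.
have [y [hy ezs]] := hPf _ Pzs.
exists (X1 y), (X2 y), (X3 y), (XM y); split => //.
- move=> l1' l2' l3' mu' hf'.
  have := hmax _ (hfP _ _ _ _ hf'); rewrite ezs //.
- apply: le_trans o0 _.
  have -> : D_obj Js v (X1 y) (X2 y) (X3 y) (XM y) = zs by rewrite ezs.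
  exact: hmax (hfP _ _ _ _ f0).
- exact: hobj0.
Qed.
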